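(* Let $\mathcal A$ be a mixed online algorithm for an online problem $(\mathcal X,\mathcal R,d)$. Then there exist (1) a randomized algorithm $\mathcal A_1$ given as a probability distribution over deterministic online algorithms, (2) a behavioral online algorithm $\mathcal A_2$, and (3) a distributional online algorithm $\mathcal A_3$, all for the same problem, such that for every finite request sequence $\varrho$ the expected cost of $\mathcal A_1$ and of $\mathcal A_2$ on $\varrho$, and the cost of $\mathcal A_3$ on $\varrho$, are each at most $E(\mathrm{cost}_{\mathcal A}(\varrho))$.
   Context: Online problem: a set $\mathcal X$ of states (configurations), a set $\mathcal R$ of requests, a start state $s^0\in\mathcal X$, a function $d:\mathcal X\times\mathcal X\to[0,\infty)$ with $d(x,x)=0$ and $d(x,z)\le d(x,y)+d(y,z)$, and a cost function $\mathrm{cost}:\mathcal X\times\mathcal R\times\mathcal X\to[0,\infty)$ ($\mathrm{cost}(x,r,y)$ is the cost of serving request $r$ while moving from $x$ to $y$) satisfying $\mathrm{cost}(u,r,v)\le d(u,x)+\mathrm{cost}(x,r,y)+d(y,v)$ for all $u,x,y,v\in\mathcal X$, $r\in\mathcal R$. $\Pi$ denotes the set of finitely supported probability distributions on $\mathcal X$; a point mass at $x$ is identified with $x$. For $\pi,\pi'\in\Pi$ and $r\in\mathcal R$, $\mathrm{cost}(\pi,r,\pi')$ is the minimum transportation cost: the minimum of $\sum_{x,y}\gamma(x,y)\,\mathrm{cost}(x,r,y)$ over all probability distributions $\gamma$ on $\mathrm{supp}(\pi)\times\mathrm{supp}(\pi')$ whose first marginal is $\pi$ and second marginal is $\pi'$.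 Mixed online algorithm $\mathcal A$: a set $\mathcal M$ of memory states, a start memory state $m^0$, and for each full state $k=(\pi,m)\in\Pi\times\mathcal M$ (reachable by $\mathcal A$) and each request $r$, a finite list of ''subsequent'' full states $k_i=(\pi_i,m_i)$, $i=1,\dots,p$, with weights $\lambda_i>0$, $\sum_i\lambda_i=1$. Starting from $k^0=(s^0,m^0)$, on request $r^t$ the algorithm moves from $k^{t-1}$ to $k^t=k_i$ (the subsequents for $(k^{t-1},r^t)$) with probability $\lambda_i$. The cost of such a step is $\mathrm{cost}_{\mathcal A}(k,r)=\mathrm{cost}(\pi,r,\bar\pi)$ where $\bar\pi=\sum_i\lambda_i\pi_i$, and $\mathrm{cost}_{\mathcal A}(\varrho)=\sum_{t=1}^n\mathrm{cost}_{\mathcal A}(k^{t-1},r^t)$ (a random variable). Deterministic online algorithm: assigns to each finite request sequence $r^1\dots r^t$ a state $x^t$ depending only on $r^1,\dots,r^t$ (with $x^0=s^0$); its cost on $r^1\dots r^n$ is $\sum_t\mathrm{cost}(x^{t-1},r^t,x^t)$. A distribution over deterministic online algorithms is a random variable whose values are deterministic online algorithms; its cost is the expected cost. Behavioral online algorithm: a set $\mathcal M$ of memory states, a start memory $m^0$, and for each $(x,m)\in\mathcal X\times\mathcal M$ and $r\in\mathcal R$ a finitely supported probability distribution on $\mathcal X\times\mathcal M$; starting from $(s^0,m^0)$, on request $r^t$ it draws $(x^t,m^t)$ from the distribution associated with $(x^{t-1},m^{t-1},r^t)$; its cost is the random variable $\sum_t\mathrm{cost}(x^{t-1},r^t,x^t)$.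 Distributional online algorithm: a set $\mathcal M$ of memory states, a start memory $m^0$, and a deterministic map $(\pi,m,r)\mapsto(\pi',m')$ from $\Pi\times\mathcal M\times\mathcal R$ to $\Pi\times\mathcal M$; starting from $(s^0,m^0)$ it computes $(\pi^t,m^t)$ from $(\pi^{t-1},m^{t-1},r^t)$, and its cost is $\sum_t\mathrm{cost}(\pi^{t-1},r^t,\pi^t)$. *)

(* Defs.v *)
From HB Require Import structures.
From mathcomp Require Import all_boot all_order all_algebra.
From mathcomp Require Import all_classical all_reals all_analysis.
Set Implicit Arguments. Unset Strict Implicit. Unset Printing Implicit Defensive.
Import Order.TTheory GRing.Theory Num.Theory.
Local Open Scope classical_set_scope.
Local Open Scope ring_scope.

Section Defs.
Variables (R : realType) (X Req : Type).
(* cost x r y : cost of serving request r while moving from x to y *)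
Variable cost : X -> Req -> X -> R.

Definition supp (f : X -> R) : set {classic X} := [set x | f x != 0].

Record fdist := FDist {
  fmass :> X -> R;
  fmass_ge0 : forall x, 0 <= fmass x;
  fmass_fin : finite_set (supp fmass);
  fmass_sum1 : \sum_(x \in supp fmass) fmass x = 1 }.

Definition is_point_mass (pi : fdist) (s : X) :=
  forall x, fmass pi x = (`[< x = s >])%:R.

Definition coupling (f g : X -> R) (gamma : X -> X -> R) :=
  [/\ forall x y, 0 <= gamma x y,
      forall x y, gamma x y != 0 -> supp f x /\ supp g y,
      forall x, \sum_(y \in supp g) gamma x y = f x &
      forall y, \sum_(x \in supp f) gamma x y = g y].

Definition coupling_cost (f : X -> R) (r : Req) (g : X -> R) (gamma : X -> X -> R) :=
  \sum_(x \in supp f) \sum_(y \in supp g) gamma x y * cost x r y.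

(* cost(pi, r, pi') : minimum transportation cost (as an infimum, which is attained) *)
Definition tcost (f : X -> R) (r : Req) (g : X -> R) : R :=
  inf [set coupling_cost f r g gamma | gamma in coupling f g].

Section Mixed.
Variable M : Type.
Variable step : fdist * M -> Req -> seq (R * (fdist * M)).

Definition mix (l : seq (R * (fdist * M))) : X -> R :=
  fun x => \sum_(p <- l) p.1 * fmass p.2.1 x.

Definition mixed_valid :=
  forall k r, all (fun p => 0 < p.1) (step k r) /\ \sum_(p <- step k r) p.1 = 1.

(* expected value E(cost_A(rho)) of the mixed algorithm started at full state k,
   computed along the (finitely branching) random process *)
Fixpoint mixed_ecost (rho : seq Req) (k : fdist * M) : R :=
  match rho with
  | [::] => 0
  | r :: rho' => tcost (fmass k.1) r (mix (step k r))
                 + \sum_(p <- step k r) p.1 * mixed_ecost rho' p.2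
  end.
End Mixed.

(* a deterministic online algorithm maps each request prefix r^1..r^t to x^t;
   [det_cost a h rho] is the cost of serving rho after history h *)
Fixpoint det_cost_from (a : seq Req -> X) (h : seq Req) (rho : seq Req) : R :=
  match rho with
  | [::] => 0
  | r :: rho' => cost (a h) r (a (rcons h r)) + det_cost_from a (rcons h r) rho'
  end.
Definition det_cost (a : seq Req -> X) (rho : seq Req) := det_cost_from a [::] rho.

Section Behavioral.
Variable M : Type.
Variable bstep : X -> M -> Req -> seq (R * (X * M)).

Definition behavioral_valid :=
  forall x m r, all (fun p => 0 <= p.1) (bstep x m r) /\ \sum_(p <- bstep x m r) p.1 = 1.

Fixpoint behavioral_ecost (rho : seq Req) (x : X) (m : M) : R :=
  match rho with
  | [::] => 0
  | r :: rho' => \sum_(p <- bstep x m r)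
                    p.1 * (cost x r p.2.1 + behavioral_ecost rho' p.2.1 p.2.2)
  end.
End Behavioral.

Section Distributional.
Variable M : Type.
Variable dstep : fdist -> M -> Req -> fdist * M.

Fixpoint distributional_cost (rho : seq Req) (pi : fdist) (m : M) : R :=
  match rho with
  | [::] => 0
  | r :: rho' => let k := dstep pi m r in
                 tcost (fmass pi) r (fmass k.1) + distributional_cost rho' k.1 k.2
  end.
End Distributional.

End Defs.

(* Main.v *)
Require Import Defs.
From HB Require Import structures.
From mathcomp Require Import all_boot all_order all_algebra.
From mathcomp Require Import all_classical all_reals all_analysis.
From mathcomp Require Import finmap measurable_realfun uniform_distribution.
From mathcomp Require Import ring lra.
Set Implicit Arguments. Unset Strict Implicit. Unset Printing Implicit Defensive.
Import Order.TTheory GRing.Theory Num.Theory.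
Import numFieldTopology.Exports numFieldNormedType.Exports.
Local Open Scope classical_set_scope.
Local Open Scope ring_scope.

Lemma lin_continuous (R : realType) N (a : 'I_N -> R) :
  continuous (fun v : 'rV[R]_N => \sum_(k < N) a k * v ord0 k).
Proof.
apply: (@continuous_big _ _ +%R 0 xpredT _ _ (index_enum _)).
  exact: add_continuous.
move=> k _ v; apply: continuousM; first exact: cst_continuous.
exact: coord_continuous.
Qed.

Lemma sum_pick (R : realType) (T : eqType) (s : seq T) (a : T) (G : T -> R) :
  uniq s -> \sum_(z <- s) (z == a)%:R * G z = (a \in s)%:R * G a.
Proof.
move=> us; case: (boolP (a \in s)) => ins.
  rewrite (bigD1_seq a) //= eqxx mul1r big1 ?addr0 ?mul1r // => z /negbTE ->.
  by rewrite mul0r.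
rewrite mul0r big1_seq // => z /= zs; case: eqP => [ez|]; last by rewrite mul0r.
by move: zs; rewrite ez (negbTE ins).
Qed.

Section Gen.
Variables (R : realType) (X Req : Type) (cost : X -> Req -> X -> R).
Hypothesis cost_ge0 : forall x r y, 0 <= cost x r y.

Definition esupp (f : X -> R) : seq {classic X} := fset_set (supp f).

Lemma esuppE (f : X -> R) x : finite_set (supp f) -> (x \in esupp f) = (f x != 0).
Proof. by move=> fin; rewrite /esupp in_fset_set //; apply/idP/idP; rewrite in_setE. Qed.

Lemma esupp_uniq (f : X -> R) : uniq (esupp f).
Proof. exact: fset_uniq. Qed.

Lemma fsum_esupp (f : X -> R) (F : X -> R) : finite_set (supp f) ->
  \sum_(x \in supp f) F x = \sum_(x <- esupp f) F x.
Proof.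
move=> fin; rewrite [RHS]fsbig_seq ?esupp_uniq //.
have -> : [set` esupp f] = supp f.
  by apply/seteqP; split => x /=; rewrite esuppE.
by [].
Qed.

End Gen.

Section Attain.
Variables (R : realType) (X Req : Type) (cost : X -> Req -> X -> R).
Hypothesis cost_ge0 : forall x r y, 0 <= cost x r y.
Local Notation T := {classic X}.

Lemma coupling_cost_ge0 f g r gam : coupling f g gam -> 0 <= coupling_cost cost f r g gam.
Proof.
move=> [g0 _ _ _]; apply: fsumr_ge0 => x _; apply: fsumr_ge0 => y _.
exact: mulr_ge0.
Qed.

Lemma tcost_le f g r gam : coupling f g gam -> tcost cost f r g <= coupling_cost cost f r g gam.
Proof.
move=> cg; apply: ge_inf; last by exists gam.
by exists 0 => _ [h ch <-]; exact: coupling_cost_ge0.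
Qed.

Lemma sum_pick1 (s : seq T) (a : T) : uniq s -> a \in s -> \sum_(z <- s) (a == z)%:R = 1 :> R.
Proof.
move=> us ins; rewrite (eq_bigr (fun z => (z == a)%:R * 1)); last by move=> z _; rewrite mulr1 eq_sym.
by rewrite sum_pick // ins mul1r.
Qed.

Lemma tcost_attained f g r : (forall x, 0 <= f x) -> finite_set (supp f) -> finite_set (supp g) ->
  (exists gam, coupling f g gam) ->
  exists2 gam, coupling f g gam & coupling_cost cost f r g gam = tcost cost f r g.
Proof.
move=> f0 finf fing [gam0 cg0].
pose ef := esupp f; pose eg := esupp g.
have uef : uniq ef := esupp_uniq f.
have ueg : uniq eg := esupp_uniq g.
pose P : seq (T * T) := [seq (x, y) | x <- ef, y <- eg].
have uP : uniq P.
  apply: allpairs_uniq => //; move=> [? ?] [? ?] _ _ [] /= -> ->; done.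
pose N := size P.
pose p := tnth (in_tuple P).
have pP k : p k \in P := mem_tnth k (in_tuple P).
have pef k : (p k).1 \in ef by have /allpairsP[[a b] [/= ? ? ->]] := pP k.
have peg k : (p k).2 \in eg by have /allpairsP[[a b] [/= ? ? ->]] := pP k.
have c1 (F : T -> T -> R) : \sum_(x <- ef) \sum_(y <- eg) F x y = \sum_(z <- P) F z.1 z.2.
  by rewrite big_allpairs.
have c2 (F : T -> T -> R) : \sum_(z <- P) F z.1 z.2 = \sum_(k < N) F (p k).1 (p k).2.
  by rewrite (big_tnth _ _ _ xpredT).
pose gam (v : 'rV[R]_N) (x y : X) := \sum_(k < N) ((p k == ((x : T), (y : T)))%:R * v ord0 k).
pose L1 x (v : 'rV[R]_N) := \sum_(k < N) (((p k).1 == (x : T))%:R * v ord0 k).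
pose L2 y (v : 'rV[R]_N) := \sum_(k < N) (((p k).2 == (y : T))%:R * v ord0 k).
pose obj (v : 'rV[R]_N) := \sum_(k < N) (cost (p k).1 r (p k).2 * v ord0 k).
have m1 v x : \sum_(y <- eg) gam v x y = L1 x v.
  rewrite /gam exchange_big; apply: eq_bigr => k _ /=; rewrite -big_distrl /=; congr (_ * _).
  move: (peg k); case: (p k) => a b /= hb.
  case: (eqVneq a x) => [->|nax].
    rewrite (eq_bigr (fun y => (b == y)%:R)) ?sum_pick1 //.
    by move=> y _; rewrite xpair_eqE eqxx.
  by rewrite big1 // => y _; rewrite xpair_eqE (negbTE nax).
have m2 v y : \sum_(x <- ef) gam v x y = L2 y v.
  rewrite /gam exchange_big; apply: eq_bigr => k _ /=; rewrite -big_distrl /=; congr (_ * _).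
  move: (pef k); case: (p k) => a b /= ha.
  case: (eqVneq b y) => [->|nby].
    rewrite (eq_bigr (fun x => (a == x)%:R)) ?sum_pick1 //.
    by move=> x _; rewrite xpair_eqE eqxx andbT.
  by rewrite big1 // => x _; rewrite xpair_eqE (negbTE nby) andbF.
have cgam v : \sum_(x <- ef) \sum_(y <- eg) gam v x y * cost x r y = obj v.
  rewrite /gam.
  transitivity (\sum_(x <- ef) \sum_(y <- eg) \sum_(k < N)
      ((p k == ((x : T), (y : T)))%:R * v ord0 k * cost x r y)).
    by apply: eq_bigr => x _; apply: eq_bigr => y _; rewrite big_distrl.
  under eq_bigr => x _ do rewrite exchange_big.
  rewrite exchange_big /=.
  transitivity (\sum_(k < N) v ord0 k * \sum_(x <- ef) \sum_(y <- eg)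
                   ((p k == ((x : T), (y : T)))%:R * cost x r y)).
    apply: eq_bigr => k _; rewrite big_distrr; apply: eq_bigr => x _.
    rewrite big_distrr; apply: eq_bigr => y _ /=.
    by rewrite mulrCA mulrA.
  apply: eq_bigr => k _; rewrite mulrC; congr (_ * _).
  rewrite c1 (eq_bigr (fun z => (z == p k)%:R * cost z.1 r z.2)).
    by rewrite sum_pick // pP mul1r.
  by move=> [a b] _ /=; rewrite eq_sym.
have ccost h : coupling_cost cost f r g h = \sum_(x <- ef) \sum_(y <- eg) h x y * cost x r y.
  rewrite /coupling_cost fsum_esupp //; apply: eq_bigr => x _.
  by rewrite fsum_esupp.
have marg1 h x : coupling f g h -> \sum_(y <- eg) h x y = f x.
  by move=> [_ _ hm _]; rewrite -fsum_esupp // hm.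
have marg2 h y : coupling f g h -> \sum_(x <- ef) h x y = g y.
  by move=> [_ _ _ hm]; rewrite -fsum_esupp // hm.
pose vec (h : X -> X -> R) : 'rV[R]_N := \row_(k < N) h (p k).1 (p k).2.
have vecE h k : vec h ord0 k = h (p k).1 (p k).2 by rewrite mxE.
have objvec h : obj (vec h) = \sum_(x <- ef) \sum_(y <- eg) h x y * cost x r y.
  rewrite c1 (c2 (fun a b => h a b * cost a r b)); apply: eq_bigr => k _.
  by rewrite vecE mulrC.
have L1vec h x : coupling f g h -> L1 x (vec h) = f x.
  move=> ch; rewrite /L1.
  rewrite (eq_bigr (fun k => ((p k).1 == (x : T))%:R * h (p k).1 (p k).2)); last by move=> k _; rewrite vecE.
  rewrite -(c2 (fun a b => (a == (x : T))%:R * h a b)) -(c1 (fun a b => (a == (x : T))%:R * h a b)).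
  rewrite (eq_bigr (fun a => (a == (x : T))%:R * \sum_(y <- eg) h a y)); last by move=> a _; rewrite big_distrr.
  rewrite sum_pick // (marg1 h x ch); case: (boolP (x \in ef)) => hx; rewrite ?mul1r // mul0r.
  by move: hx; rewrite esuppE // negbK => /eqP ->.
have L2vec h y : coupling f g h -> L2 y (vec h) = g y.
  move=> ch; rewrite /L2.
  rewrite (eq_bigr (fun k => ((p k).2 == (y : T))%:R * h (p k).1 (p k).2)); last by move=> k _; rewrite vecE.
  rewrite -(c2 (fun a b => (b == (y : T))%:R * h a b)) -(c1 (fun a b => (b == (y : T))%:R * h a b)) exchange_big /=.
  rewrite (eq_bigr (fun b => (b == (y : T))%:R * \sum_(x <- ef) h x b)); last by move=> b _; rewrite big_distrr.
  rewrite sum_pick // (marg2 h y ch); case: (boolP (y \in eg)) => hy; rewrite ?mul1r // mul0r.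
  by move: hy; rewrite esuppE // negbK => /eqP ->.
pose B := \sum_(x <- ef) f x.
have boundvec h k : coupling f g h -> `[0, B]%classic (vec h ord0 k).
  move=> ch; have [h0 _ _ _] := ch.
  rewrite /= in_itv /= vecE h0 /=.
  apply: (le_trans (y := f (p k).1)).
    rewrite -(marg1 h) // (bigD1_seq (p k).2) //= lerDl.
    by apply: sumr_ge0 => y _.
  by rewrite /B (bigD1_seq (p k).1) //= lerDl; apply: sumr_ge0 => y _.
pose K := (\bigcap_(k in setT) (fun v : 'rV[R]_N => v ord0 k) @^-1` `[0, B]%classic) `&`
          (\bigcap_(x in setT) L1 x @^-1` [set f x]) `&`
          (\bigcap_(y in setT) L2 y @^-1` [set g y]).
have Kvec h : coupling f g h -> K (vec h).
  move=> ch; split; [split|].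
  - by move=> k _; apply: boundvec.
  - by move=> x _; apply: L1vec.
  - by move=> y _; apply: L2vec.
have Kclosed : closed K.
  apply: closedI; [apply: closedI|].
  - apply: closed_bigI => k _; apply: preimage_closed; first by move=> v _; apply: (@coord_continuous R 1 N ord0 k).
    exact: interval_closed.
  - apply: closed_bigI => x _; apply: preimage_closed; first by move=> v _; apply: lin_continuous.
    exact: closed_eq.
  - apply: closed_bigI => y _; apply: preimage_closed; first by move=> v _; apply: lin_continuous.
    exact: closed_eq.
have Kcompact : compact K.
  apply: (subclosed_compact Kclosed (rV_compact (fun _ : 'I_N => @segment_compact R 0 B))).
  by move=> v [[Kv _] _] k; apply: Kv.
have objc : {within K, continuous obj}.
  by apply: continuous_subspaceT; apply: lin_continuous.
have [vs vsK vsmin] := EVT_min_rV (ex_intro _ _ (Kvec _ cg0)) Kcompact objc.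
move: vsK; rewrite in_setE => -[[Kb KL1] KL2].
have cs : coupling f g (gam vs).
  split.
  - move=> x y; apply: sumr_ge0 => k _; apply: mulr_ge0 => //.
    by have := Kb k I; rewrite /= in_itv /= => /andP[].
  - move=> x y; case: (boolP (((x : T), (y : T)) \in P)).
      move=> /allpairsP [[a b] [/= ha hb [-> ->]]] _.
      by split; [move: ha|move: hb]; rewrite esuppE.
    move=> nP /eqP H; exfalso; apply: H; rewrite /gam big1 // => k _.
    case: eqP => [ep|]; last by rewrite mul0r.
    by move: nP; rewrite -ep pP.
  - by move=> x; rewrite fsum_esupp // m1; apply: KL1.
  - by move=> y; rewrite fsum_esupp // m2; apply: KL2.
exists (gam vs) => //.
have cvs : coupling_cost cost f r g (gam vs) = obj vs by rewrite ccost cgam.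
apply/eqP; rewrite eq_le tcost_le // andbT cvs.
apply: lb_le_inf; first by exists (coupling_cost cost f r g gam0), gam0.
move=> _ [h ch <-]; rewrite ccost -objvec; apply: vsmin.
by rewrite in_setE; apply: Kvec.
Qed.

End Attain.

Section Mixture.
Variables (R : realType) (X : Type).
Local Notation T := {classic X}.

Lemma fsum_widen (f : X -> R) (s : seq T) (F : X -> R) : uniq s ->
  (forall x : T, f x != 0 -> x \in s) -> (forall x, f x = 0 -> F x = 0) ->
  \sum_(x \in supp f) F x = \sum_(x <- s) F x.
Proof.
move=> us sub van; apply: fsbig_fwiden => //.
- by move=> x [_ /=] nf; apply: van; apply/eqP; apply: contra_notT nf.
Qed.

Lemma prod_coupling (f g : X -> R) : (forall x, 0 <= f x) -> (forall y, 0 <= g y) ->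
  \sum_(x \in supp f) f x = 1 -> \sum_(y \in supp g) g y = 1 ->
  coupling f g (fun x y => f x * g y).
Proof.
move=> f0 g0 sf sg; split.
- by move=> x y; apply: mulr_ge0.
- by move=> x y; rewrite mulf_eq0 negb_or => /andP[].
- by move=> x; rewrite -mulr_fsumr sg mulr1.
- move=> y; rewrite (eq_fsbigr (fun x : T => g y * f x)); last by move=> x _; rewrite mulrC.
  by rewrite -mulr_fsumr sf mulr1.
Qed.

Fixpoint InL (I : Type) (p : I) (l : seq I) : Prop :=
  if l is q :: l' then q = p \/ InL p l' else False.

Lemma InL_map (I : Type) (J : eqType) (f : I -> J) p l : InL p l -> f p \in map f l.
Proof. by elim: l => [|q l IH] //= [->|pl]; rewrite in_cons ?eqxx // IH ?orbT. Qed.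

Lemma eq_big_In (I : Type) (l : seq I) (F G : I -> R) :
  (forall p, InL p l -> F p = G p) -> \sum_(p <- l) F p = \sum_(p <- l) G p.
Proof.
elim: l => [|q l IH] H; first by rewrite !big_nil.
rewrite !big_cons H /=; last by left.
by rewrite IH // => p pl; apply: H; right.
Qed.

Lemma all_In (I : Type) (P : pred I) (l : seq I) p : all P l -> InL p l -> P p.
Proof.
elim: l => [|q l IH] //= /andP[Pq Pl] [<-|pl] //; exact: IH.
Qed.

Lemma sum_ge0_In (I : Type) (l : seq I) (F : I -> R) :
  (forall p, InL p l -> 0 <= F p) -> 0 <= \sum_(p <- l) F p.
Proof.
elim: l => [|q l IH] H; first by rewrite big_nil.
rewrite big_cons addr_ge0 //; first by apply: H; left.
by apply: IH => p pl; apply: H; right.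
Qed.

Variable M : Type.
Implicit Types l : seq (R * (fdist R X * M)).

Definition wpos l := all (fun p => 0 < p.1) l.
Definition wvalid l := wpos l /\ \sum_(p <- l) p.1 = 1.

Lemma mix_ge0 l x : wpos l -> 0 <= mix l x.
Proof.
move=> pos; apply: sum_ge0_In => p pl; apply: mulr_ge0; last exact: fmass_ge0.
exact/ltW/(all_In pos pl).
Qed.

Lemma mix_gt0 l p x : wpos l -> InL p l -> fmass p.2.1 x != 0 -> 0 < mix l x.
Proof.
elim: l => [|q l IH] //= /andP[q0 pos] [<-|pl] px; rewrite /mix big_cons.
  rewrite ltr_wpDr //; first exact: (mix_ge0 x pos).
  by apply: mulr_gt0 => //; rewrite lt_neqAle eq_sym px fmass_ge0.
rewrite addrC ltr_wpDr //; last exact: IH.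
by apply: mulr_ge0; [exact: ltW|exact: fmass_ge0].
Qed.

Lemma mix_neq0 l p x : wpos l -> InL p l -> fmass p.2.1 x != 0 -> mix l x != 0.
Proof. by move=> pos pl px; rewrite gt_eqF // (mix_gt0 pos pl px). Qed.

Lemma mix_supp l x : mix l x != 0 -> exists p, InL p l /\ fmass p.2.1 x != 0.
Proof.
elim: l => [|q l IH]; first by rewrite /mix big_nil eqxx.
rewrite /mix big_cons; case: (eqVneq (fmass q.2.1 x) 0) => [->|qx].
  by rewrite mulr0 add0r => /IH [p [pl px]]; exists p; split => //; right.
by move=> _; exists q; split => //; left.
Qed.

Lemma mix_fin l : finite_set (supp (mix l)).
Proof.
apply: (@sub_finite_set _ _ [set` flatten [seq esupp (fmass p.2.1) | p <- l]]) => //.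
move=> x /= /mix_supp [p [pl px]]; apply/flattenP.
exists (esupp (fmass p.2.1)).
  exact: InL_map.
by rewrite esuppE //; exact: fmass_fin.
Qed.

Lemma mix_sum1 l : wvalid l -> \sum_(x \in supp (mix l)) mix l x = 1.
Proof.
move=> [pos s1]; rewrite fsum_esupp; last exact: mix_fin.
rewrite /mix exchange_big /= -s1; apply: eq_big_In => p pl.
rewrite -big_distrr /= -[RHS]mulr1; congr (_ * _).
rewrite -(fmass_sum1 p.2.1); apply/esym/fsum_widen.
- exact: esupp_uniq.
- by move=> x px; rewrite esuppE; [exact: (mix_neq0 pos pl px)|exact: mix_fin].
- by [].
Qed.

End Mixture.

Lemma all_allpairs (I J K : Type) (P : pred K) (F : I -> J -> K) (s : seq I) (t : seq J) :
  (forall y q, InL q t -> P (F y q)) -> all P [seq F y q | y <- s, q <- t].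
Proof.
move=> H; elim: s => //= y s IH; rewrite all_cat IH andbT all_map.
elim: t {IH} H => //= q t IHt H; rewrite /= H /=; last by left.
by apply: IHt => y' q' h; apply: H; right.
Qed.

Section Behav.
Variables (R : realType) (X Req : Type) (cost : X -> Req -> X -> R).
Hypothesis cost_ge0 : forall x r y, 0 <= cost x r y.
Variables (M : Type) (step : fdist R X * M -> Req -> seq (R * (fdist R X * M))).
Hypothesis step_valid : mixed_valid step.
Local Notation T := {classic X}.

Definition opt (f : X -> R) r (g : X -> R) : X -> X -> R :=
  match pselect (exists2 h, coupling f g h & coupling_cost cost f r g h = tcost cost f r g) with
  | left H => s2val (cid2 H)
  | right _ => fun _ _ => 0
  end.

Lemma opt_spec f r g : (exists2 h, coupling f g h & coupling_cost cost f r g h = tcost cost f r g) ->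
  coupling f g (opt f r g) /\ coupling_cost cost f r g (opt f r g) = tcost cost f r g.
Proof.
rewrite /opt => H; case: pselect => [H'|//]; by case: (cid2 H').
Qed.

Definition gk k r := mix (step k r).
Definition ok k r := opt (fmass k.1) r (gk k r).

Lemma gk_valid k r : wvalid (step k r).
Proof. exact: step_valid. Qed.

Lemma ok_spec k r : coupling (fmass k.1) (gk k r) (ok k r) /\
  coupling_cost cost (fmass k.1) r (gk k r) (ok k r) = tcost cost (fmass k.1) r (gk k r).
Proof.
apply: opt_spec; apply: tcost_attained => //.
- exact: fmass_ge0.
- exact: fmass_fin.
- exact: mix_fin.
- exists (fun x y => fmass k.1 x * gk k r y); apply: prod_coupling.
  + exact: fmass_ge0.
  + by move=> y; apply: mix_ge0; case: (gk_valid k r).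
  + exact: fmass_sum1.
  + exact: mix_sum1 (gk_valid k r).
Qed.

Definition bstep (x : X) (k : fdist R X * M) (r : Req) : seq (R * (X * (fdist R X * M))) :=
  if fmass k.1 x != 0 then
    [seq ((ok k r x y / fmass k.1 x) * (q.1 * fmass q.2.1 y / gk k r y), ((y : X), q.2))
      | y <- esupp (gk k r), q <- step k r]
  else [:: (1, (x, k))].

Lemma bstep_valid : behavioral_valid bstep.
Proof.
move=> x k r; rewrite /bstep; case: ifPn => fx; last by rewrite /= ler01 big_cons big_nil addr0.
have [[c0 _ cm _] _] := ok_spec k r.
have [pos _] := gk_valid k r.
split.
  apply: all_allpairs => y q ql /=; apply: mulr_ge0; apply: mulr_ge0.
  - exact: c0.
  - by rewrite invr_ge0 fmass_ge0.
  - apply: mulr_ge0; last exact: fmass_ge0.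
    exact/ltW/(all_In pos ql).
  - by rewrite invr_ge0 mix_ge0.
rewrite big_allpairs_dep /=.
rewrite (eq_big_seq (fun y : T => ok k r x y / fmass k.1 x)).
  rewrite -big_distrl /= -fsum_esupp; last exact: mix_fin.
  by rewrite cm mulfV.
move=> y; rewrite esuppE; last exact: mix_fin.
move=> gy; rewrite -big_distrr /= -[RHS]mulr1; congr (_ * _).
by rewrite -big_distrl /= mulfV.
Qed.

Lemma binv rho k : \sum_(x \in supp (fmass k.1)) fmass k.1 x * behavioral_ecost cost bstep rho x k
  = mixed_ecost cost step rho k.
Proof.
elim: rho k => [|r rho IH] k /=.
  by rewrite fsbig1 // => x _; rewrite mulr0.
have [[c0 csupp cm1 cm2] ceq] := ok_spec k r.
have [pos _] := gk_valid k r.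
have finf := fmass_fin k.1.
have fing : finite_set (supp (gk k r)) := mix_fin _.
pose f := fmass k.1; pose l := step k r; pose g := gk k r; pose gm := ok k r.
pose ef := esupp f; pose eg := esupp g.
pose B := behavioral_ecost cost bstep rho.
pose a y (q : R * (fdist R X * M)) := q.1 * fmass q.2.1 y / g y.
have ga y : y \in eg -> \sum_(q <- l) a y q = 1.
  by rewrite esuppE // => gy; rewrite -big_distrl /= mulfV.
have ga2 y q : y \in eg -> g y * a y q = q.1 * fmass q.2.1 y.
  by rewrite esuppE // => gy; rewrite /a mulrCA mulfV ?mulr1.
rewrite fsum_esupp //.
transitivity (\sum_(x <- ef) \sum_(y <- eg) \sum_(q <- l)
                (gm x y * a y q) * (cost x r y + B y q.2)).
  apply: eq_big_seq => x; rewrite esuppE // => fx.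
  rewrite /bstep fx big_allpairs_dep /= big_distrr; apply: eq_bigr => y _ /=.
  rewrite big_distrr; apply: eq_bigr => q _ /=.
  by rewrite /a !mulrA [fmass k.1 x * _]mulrC mulfK.
transitivity (\sum_(x <- ef) \sum_(y <- eg) \sum_(q <- l) (gm x y * a y q * cost x r y) +
              \sum_(x <- ef) \sum_(y <- eg) \sum_(q <- l) (gm x y * a y q * B y q.2)).
  rewrite -big_split; apply: eq_bigr => x _; rewrite -big_split; apply: eq_bigr => y _.
  by rewrite -big_split; apply: eq_bigr => q _ /=; rewrite mulrDr.
congr (_ + _).
  rewrite -ceq /coupling_cost fsum_esupp //; apply: eq_bigr => x _.
  rewrite fsum_esupp //; apply: eq_big_seq => y yg.
  by rewrite -big_distrl -big_distrr /= ga // mulr1.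
rewrite exchange_big /=.
under eq_bigr => y _ do rewrite exchange_big /=.
rewrite exchange_big /=; apply: eq_big_In => q ql.
rewrite -(IH q.2) (@fsum_widen _ _ _ eg) ?big_distrr /=.
- apply: eq_big_seq => y yg; rewrite -!big_distrl /= -fsum_esupp // cm2.
  by rewrite ga2 // mulrA.
- exact: esupp_uniq.
- by move=> y qy; rewrite esuppE //; apply: (mix_neq0 pos ql qy).
- by move=> y ->; rewrite mul0r.
Qed.

End Behav.

Lemma psum_gt0 (R : realType) (I : Type) (l : seq I) (F : I -> R) p :
  (forall q, InL q l -> 0 <= F q) -> InL p l -> 0 < F p -> 0 < \sum_(q <- l) F q.
Proof.
elim: l => [|q l IH] //= H [<-|pl] Fp; rewrite big_cons.
  by rewrite ltr_wpDr //; apply: sum_ge0_In => q' ql; apply: H; right.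
rewrite addrC ltr_wpDr //; first by apply: H; left.
by apply: IH => // q' ql; apply: H; right.
Qed.

Lemma sum_In_neq0 (R : realType) (I : Type) (l : seq I) (F : I -> R) :
  \sum_(q <- l) F q != 0 -> exists q, InL q l /\ F q != 0.
Proof.
elim: l => [|q l IH]; first by rewrite big_nil eqxx.
rewrite big_cons; case: (eqVneq (F q) 0) => [->|Fq].
  by rewrite add0r => /IH [p [pl Fp]]; exists p; split => //; right.
by move=> _; exists q; split => //; left.
Qed.

Section Distr.
Variables (R : realType) (X Req : Type) (cost : X -> Req -> X -> R).
Hypothesis cost_ge0 : forall x r y, 0 <= cost x r y.
Variables (M : Type) (step : fdist R X * M -> Req -> seq (R * (fdist R X * M))).
Hypothesis step_valid : mixed_valid step.
Local Notation T := {classic X}.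
Local Notation ok := (ok cost step).
Local Notation gk := (gk step).

Definition next (L : seq (R * (fdist R X * M))) r : seq (R * (fdist R X * M)) :=
  flatten [seq [seq (w.1 * p.1, p.2) | p <- step w.2 r] | w <- L].

Lemma sum_next L r (F : R * (fdist R X * M) -> R) :
  \sum_(p <- next L r) F p = \sum_(w <- L) \sum_(p <- step w.2 r) F (w.1 * p.1, p.2).
Proof. by rewrite /next big_flatten big_map; apply: eq_bigr => w _; rewrite big_map. Qed.

Lemma mix_next L r x : mix (next L r) x = \sum_(w <- L) w.1 * gk w.2 r x.
Proof.
rewrite /mix sum_next; apply: eq_bigr => w _; rewrite /gk /mix big_distrr /=.
by apply: eq_bigr => p _; rewrite mulrA.
Qed.

Lemma InL_flatten (I : Type) (p : I) (ls : seq (seq I)) :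
  InL p (flatten ls) -> exists2 l, InL l ls & InL p l.
Proof.
elim: ls => [|l ls IH] //=; elim: l => [|q l IHl] /=.
  by move=> /IH [l' l'ls pl']; exists l' => //; right.
move=> [<-|/IHl [l' [<-|l'ls] pl']].
- by exists (q :: l) => /=; [left|left].
- by exists (q :: l) => /=; [left|right].
- by exists l' => //; right.
Qed.

Lemma InL_map2 (I J : Type) (f : I -> J) (p : J) (l : seq I) :
  InL p (map f l) -> exists2 q, InL q l & p = f q.
Proof.
elim: l => [|q l IH] //= [<-|/IH [q' ql ->]]; first by exists q => //; left.
by exists q' => //; right.
Qed.

Lemma next_valid L r : wvalid L -> wvalid (next L r).
Proof.
move=> [pos s1]; split.
  elim: L pos {s1} => //= w L IH /andP[w0 pos]; rewrite /wpos /next /= all_cat.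
  move: (IH pos); rewrite /wpos /next => ->; rewrite andbT all_map; apply: sub_all (proj1 (step_valid w.2 r)) => p /= p0.
  exact: mulr_gt0.
rewrite sum_next -s1; apply: eq_bigr => w _ /=.
by rewrite -big_distrr /= (proj2 (step_valid w.2 r)) mulr1.
Qed.

Lemma tcost_mix L r : wvalid L ->
  tcost cost (mix L) r (mix (next L r)) <= \sum_(w <- L) w.1 * tcost cost (fmass w.2.1) r (gk w.2 r).
Proof.
move=> [pos s1].
pose L' := next L r.
pose G x y := \sum_(w <- L) w.1 * ok w.2 r x y.
have spec (w : R * (fdist R X * M)) := ok_spec cost_ge0 step_valid w.2 r.
have wp (w : R * (fdist R X * M)) : InL w L -> 0 < w.1 by move=> wl; apply: (all_In pos wl).
have gk0 (w : R * (fdist R X * M)) y : 0 <= gk w.2 r y by apply: mix_ge0; case: (step_valid w.2 r).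
have supL' (w : R * (fdist R X * M)) y : InL w L -> gk w.2 r y != 0 -> mix L' y != 0.
  move=> wl gy; rewrite mix_next gt_eqF //; apply: (psum_gt0 _ wl).
    by move=> q ql; apply: mulr_ge0; [exact/ltW/wp|exact: gk0].
  by apply: mulr_gt0; [exact: wp|rewrite lt_neqAle eq_sym gy gk0].
have okvan (w : R * (fdist R X * M)) x y : ok w.2 r x y != 0 -> fmass w.2.1 x != 0 /\ gk w.2 r y != 0.
  by have [[_ cs _ _] _] := spec w; move/cs.
have okv1 (w : R * (fdist R X * M)) x y : gk w.2 r y = 0 -> ok w.2 r x y = 0.
  move=> gy; apply/eqP; apply: contraT => /okvan [_]; by rewrite gy eqxx.
have okv2 (w : R * (fdist R X * M)) x y : fmass w.2.1 x = 0 -> ok w.2 r x y = 0.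
  move=> fx; apply/eqP; apply: contraT => /okvan [+ _]; by rewrite fx eqxx.
have finL := @mix_fin _ _ _ L.
have finL' := @mix_fin _ _ _ L'.
pose eL := esupp (mix L); pose eL' := esupp (mix L').
have inner (w : R * (fdist R X * M)) (F : X -> R) : InL w L -> (forall y, gk w.2 r y = 0 -> F y = 0) ->
    \sum_(y \in supp (gk w.2 r)) F y = \sum_(y <- eL') F y.
  move=> wl van; apply: fsum_widen => //; first exact: esupp_uniq.
  by move=> y gy; rewrite esuppE //; apply: supL' gy.
have outer (w : R * (fdist R X * M)) (F : X -> R) : InL w L -> (forall x, fmass w.2.1 x = 0 -> F x = 0) ->
    \sum_(x \in supp (fmass w.2.1)) F x = \sum_(x <- eL) F x.
  move=> wl van; apply: fsum_widen => //; first exact: esupp_uniq.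
  by move=> x fx; rewrite esuppE //; apply: (mix_neq0 pos wl fx).
have cG : coupling (mix L) (mix L') G.
  split.
  - move=> x y; apply: sum_ge0_In => w wl; apply: mulr_ge0; first exact/ltW/wp.
    by have [[c0 _ _ _] _] := spec w; apply: c0.
  - move=> x y /sum_In_neq0 [w [wl]]; rewrite mulf_eq0 negb_or => /andP[_ /okvan [fx gy]].
    split; [exact: (mix_neq0 pos wl fx)|exact: (supL' _ _ wl gy)].
  - move=> x; rewrite fsum_esupp // exchange_big /=; rewrite /mix; apply: eq_big_In => w wl.
    rewrite -big_distrr /=; congr (_ * _).
    have [[_ _ cm1 _] _] := spec w; rewrite -cm1 (inner w) //.
    by move=> y; apply: okv1.
  - move=> y; rewrite fsum_esupp // exchange_big /= mix_next; apply: eq_big_In => w wl.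
    rewrite -big_distrr /=; congr (_ * _).
    have [[_ _ _ cm2] _] := spec w; rewrite -cm2 (outer w) //.
    by move=> x; apply: okv2.
apply: (le_trans (tcost_le cost_ge0 r cG)).
rewrite le_eqVlt; apply/orP; left; apply/eqP.
rewrite /coupling_cost fsum_esupp //.
transitivity (\sum_(w <- L) w.1 * \sum_(x <- eL) \sum_(y <- eL') ok w.2 r x y * cost x r y).
  rewrite (eq_bigr (fun x => \sum_(y <- eL') G x y * cost x r y)); last first.
    by move=> x _; rewrite fsum_esupp.
  transitivity (\sum_(x <- eL) \sum_(y <- eL') \sum_(w <- L) w.1 * (ok w.2 r x y * cost x r y)).
    apply: eq_bigr => x _; apply: eq_bigr => y _; rewrite big_distrl; apply: eq_bigr => w _.
    by rewrite mulrA.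
  under eq_bigr => x _ do rewrite exchange_big.
  rewrite exchange_big; apply: eq_bigr => w _; rewrite big_distrr; apply: eq_bigr => x _.
  by rewrite big_distrr.
apply: eq_big_In => w wl; congr (_ * _).
have [_ <-] := spec w.
rewrite /coupling_cost (outer w) //; last first.
  by move=> x fx; apply: fsbig1 => y _; rewrite okv2 // mul0r.
apply: eq_bigr => x _; rewrite (inner w) // => y gy.
by rewrite okv1 // mul0r.
Qed.

End Distr.

Section DAlg.
Variables (R : realType) (X Req : Type) (cost : X -> Req -> X -> R).
Hypothesis cost_ge0 : forall x r y, 0 <= cost x r y.
Variables (M : Type) (step : fdist R X * M -> Req -> seq (R * (fdist R X * M))).
Hypothesis step_valid : mixed_valid step.

Definition mkfd (d : fdist R X) (h : X -> R) : fdist R X :=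
  match pselect (exists q : fdist R X, fmass q = h) with
  | left H => proj1_sig (cid H)
  | right _ => d
  end.

Lemma mkfd_spec d (L : seq (R * (fdist R X * M))) : wvalid L -> fmass (mkfd d (mix L)) = mix L.
Proof.
move=> vL; rewrite /mkfd; case: pselect => [H|nH]; first by case: (cid H).
exfalso; apply: nH.
exists (@FDist R X (mix L) (fun x => mix_ge0 x (proj1 vL)) (mix_fin L) (mix_sum1 vL)).
by [].
Qed.

Definition dstep d (pi : fdist R X) (L : seq (R * (fdist R X * M))) r :=
  (mkfd d (mix (next step L r)), next step L r).

Lemma dinv d rho : forall pi L, wvalid L -> fmass pi = mix L ->
  distributional_cost cost (dstep d) rho pi L <= \sum_(w <- L) w.1 * mixed_ecost cost step rho w.2.
Proof.
elim: rho => [|r rho IH] pi L vL epi /=.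
  by rewrite big1 // => w _; rewrite mulr0.
have vL' := next_valid step_valid r vL.
rewrite epi mkfd_spec //.
apply: le_trans (lerD (tcost_mix cost_ge0 step_valid r vL) (IH _ _ vL' (mkfd_spec d vL'))) _.
rewrite sum_next -big_split /=; apply: ler_sum => w _ /=; rewrite mulrDr big_distrr /=.
apply: lerD => //; rewrite le_eqVlt; apply/orP; left; apply/eqP; apply: eq_bigr => p _.
by rewrite mulrA.
Qed.

End DAlg.

Section Arith.
Variables (R : realType) (X Req : Type) (cost : X -> Req -> X -> R).
Hypothesis cost_ge0 : forall x r y, 0 <= cost x r y.
Variables (M2 : Type) (bst : X -> M2 -> Req -> seq (R * (X * M2))).
Hypothesis bvalid : behavioral_valid bst.
Local Notation St := ((X * M2) * R * R)%type.
Local Notation mu := (@lebesgue_measure R).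

Fixpoint pick (l : seq (R * (X * M2))) (c len u : R) (d : St) : St :=
  if l is (p, y) :: l' then
    if (c <= u) && (u < c + p * len) then (y, c, p * len) else pick l' (c + p * len) len u d
  else d.

Definition sim (st : St) (r : Req) (u : R) : St :=
  pick (bst st.1.1.1 st.1.1.2 r) st.1.2 st.2 u st.

Fixpoint Dc (rho : seq Req) (st : St) (u : R) : R :=
  if rho is r :: rho' then
    cost st.1.1.1 r (sim st r u).1.1.1 + Dc rho' (sim st r u) u
  else 0.

Definition A1 (st0 : St) (u : R) (h : seq Req) : X :=
  (foldl (fun st r => sim st r u) st0 h).1.1.1.

Lemma det_Dc st0 u h rho :
  det_cost_from cost (A1 st0 u) h rho = Dc rho (foldl (fun st r => sim st r u) st0 h) u.
Proof.
elim: rho h => [|r rho IH] h //=.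
by rewrite IH /A1 foldl_rcons.
Qed.

Lemma Dc_ge0 rho st u : 0 <= Dc rho st u.
Proof. by elim: rho st => [|r rho IH] st //=; rewrite addr_ge0. Qed.

Lemma pick_meas (G : St -> R -> R) l c len d :
  (forall st, measurable_fun setT (G st)) ->
  measurable_fun setT (fun u => G (pick l c len u d) u).
Proof.
move=> mG; elim: l c => [|[p y] l IH] c //=.
rewrite (_ : (fun u => _) = (fun u => if (c <= u) && (u < c + p * len)
                                    then G (y, c, p * len) u
                                    else G (pick l (c + p * len) len u d) u)); last first.
  by apply/funext => u; case: ifP.
apply: measurable_fun_ifT => //.
apply: measurable_and.
  by apply: measurable_fun_ler => //.
by apply: measurable_fun_ltr => //.
Qed.

Lemma Dc_meas rho st : measurable_fun setT (Dc rho st).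
Proof.
elim: rho st => [|r rho IH] st /=; first exact: measurable_cst.
apply: (pick_meas (G := fun st' u => cost st.1.1.1 r st'.1.1.1 + Dc rho st' u)).
by move=> st'; apply: measurable_funD => //; exact: IH.
Qed.

Lemma Dc_int rho : forall st : St, 0 <= st.2 ->
  (\int[mu]_(u in `[st.1.2, (st.1.2 + st.2)%R[) (Dc rho st u)%:E
     = (st.2 * behavioral_ecost cost bst rho st.1.1.1 st.1.1.2)%:E)%E.
Proof.
elim: rho => [|r rho IH] st len0 /=.
  by rewrite mulr0 integral0.
have [bv1 bv2] := bvalid st.1.1.1 st.1.1.2 r.
set x := st.1.1.1; set m := st.1.1.2; set len := st.2.
have inner : forall l c, all (fun p => 0 <= p.1) l ->
  (\int[mu]_(u in `[c, (c + (\sum_(p <- l) p.1) * len)%R[)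
     (cost x r (pick l c len u st).1.1.1 + Dc rho (pick l c len u st) u)%:E
   = ((\sum_(p <- l) p.1 * (cost x r p.2.1 + behavioral_ecost cost bst rho p.2.1 p.2.2)) * len)%:E)%E.
  elim => [|[p y] l IHl] c /=.
    by rewrite !big_nil mul0r addr0 set_itvco0 integral_set0.
  move=> /andP [p0 l0]; rewrite !big_cons /=.
  have pl0 : 0 <= p * len by apply: mulr_ge0.
  have S0 : 0 <= (\sum_(q <- l) q.1) * len.
    apply: mulr_ge0 => //; apply: sum_ge0_In => q ql; exact: (all_In l0 ql).
  rewrite (_ : `[c, c + (p + \sum_(q <- l) q.1) * len[%classic =
                `[c, c + p * len[%classic `|` `[c + p * len, c + p * len + (\sum_(q <- l) q.1) * len[%classic); last first.
    apply/seteqP; split => u /=; rewrite !in_itv /=.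
      move=> /andP[cu uc]; case: (ltP u (c + p * len)) => h; [left|right]; apply/andP; split => //; lra.
    by move=> [/andP[cu uc]|/andP[cu uc]]; apply/andP; split; lra.
  rewrite ge0_integral_setU //; last 3 first.
  - apply/measurable_EFinP; apply: measurable_funTS.
    apply: (pick_meas (G := fun st' u => cost x r st'.1.1.1 + Dc rho st' u) ((p, y) :: l)).
    by move=> st'; apply: measurable_funD => //; exact: Dc_meas.
  - by move=> u _; rewrite lee_fin addr_ge0 // Dc_ge0.
  - apply/disj_setPS => u [] /=; rewrite !in_itv /= => /andP[_ h1] /andP[h2 _]; lra.
  rewrite mulrDl EFinD; congr (_ + _)%E; last first.
    rewrite -(IHl (c + p * len)) //; apply: eq_integral.
    move=> u /set_mem /=; rewrite in_itv /= => /andP[h1 h2].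
    by rewrite ifF //; apply/negbTE; rewrite negb_and -!ltNge; apply/orP; right; lra.
  transitivity (\int[mu]_(u in `[c, (c + p * len)%R[) ((cost x r y.1)%:E + (Dc rho (y, c, p * len) u)%:E))%E.
    apply: eq_integral => u /set_mem /=; rewrite in_itv /= => /andP[h1 h2].
    by rewrite ifT ?h1 ?h2 // EFinD.
  rewrite ge0_integralD //; try (by move=> u _; rewrite lee_fin ?Dc_ge0);
    try (by apply/measurable_EFinP; apply: measurable_funTS; exact: Dc_meas).
  have := IH (y, c, p * len) pl0; rewrite /= => ->.
  rewrite integral_cst //; have := @lebesgue_measure_itv R `[c, (c + p * len)%R[; rewrite /= => ->; rewrite lte_fin.
  case: ltP => h.
    rewrite -EFinB -EFinM -EFinD; congr EFin; ring.
  have pz : p * len = 0 by lra.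
  by rewrite pz mule0 add0e mul0r mulrAC pz mul0r.
have := inner _ st.1.2 bv1; rewrite bv2 mul1r => ->.
by rewrite mulrC.
Qed.

End Arith.

Theorem mainTheorem2 (R : realType) (X Req : Type) (s0 : X)
  (dist : X -> X -> R) (cost : X -> Req -> X -> R)
  (dist_ge0 : forall x y, 0 <= dist x y)
  (dist_refl : forall x, dist x x = 0)
  (dist_tri : forall x y z, dist x z <= dist x y + dist y z)
  (cost_ge0 : forall x r y, 0 <= cost x r y)
  (cost_dist : forall u x y v r, cost u r v <= dist u x + cost x r y + dist y v)
  (* the mixed online algorithm A *)
  (M : Type) (m0 : M) (pi0 : fdist R X) (pi0_s0 : is_point_mass pi0 s0)
  (step : fdist R X * M -> Req -> seq (R * (fdist R X * M)))
  (step_valid : mixed_valid step) :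
  (* (1) a probability distribution over deterministic online algorithms *)
  (exists (d : measure_display) (Omega : measurableType d)
          (P : probability Omega R) (A1 : Omega -> seq Req -> X),
      (forall w, A1 w [::] = s0) /\
      forall rho : seq Req,
        measurable_fun setT (fun w => det_cost cost (A1 w) rho) /\
        (\int[P]_w (det_cost cost (A1 w) rho)%:E
           <= (mixed_ecost cost step rho (pi0, m0))%:E)%E) /\
  (* (2) a behavioral online algorithm *)
  (exists (M2 : Type) (m2 : M2) (bstep : X -> M2 -> Req -> seq (R * (X * M2))),
      behavioral_valid bstep /\
      forall rho : seq Req,
        behavioral_ecost cost bstep rho s0 m2 <= mixed_ecost cost step rho (pi0, m0)) /\
  (* (3) a distributional online algorithm *)
  (exists (M3 : Type) (m3 : M3) (pi3 : fdist R X) (dstep : fdist R X -> M3 -> Req -> fdist R X * M3),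
      is_point_mass pi3 s0 /\
      forall rho : seq Req,
        distributional_cost cost dstep rho pi3 m3 <= mixed_ecost cost step rho (pi0, m0)).
Proof.
have p1 : fmass pi0 s0 = 1 by rewrite (pi0_s0 s0) asboolT.
have suppE : supp (fmass pi0) = [set (s0 : {classic X})].
  apply/seteqP; split => x /=.
    rewrite /supp /= (pi0_s0 x); by case: (asboolP (x = s0)) => // _; rewrite eqxx.
  by move=> ->; rewrite /supp /= p1 oner_neq0.
have beq rho : behavioral_ecost cost (bstep cost step) rho s0 (pi0, m0) = mixed_ecost cost step rho (pi0, m0).
  by rewrite -(binv cost_ge0 step_valid rho (pi0, m0)) /= suppE fsbig_set1 p1 mul1r.
split; last split.
- pose bst := bstep cost step.
  have bv : behavioral_valid bst by apply: bstep_valid.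
  pose st0 : (X * (fdist R X * M)) * R * R := ((s0, (pi0, m0)), 0, 1).
  exists _, _, (uniform_prob (@ltr01 R) : probability _ R), (A1 bst st0); split => // rho.
  have Hdet w : det_cost cost (A1 bst st0 w) rho = Dc cost bst rho st0 w.
    exact: (det_Dc cost bst st0 w [::] rho).
  have mD : measurable_fun setT (Dc cost bst rho st0) by apply: Dc_meas.
  split.
    by rewrite (_ : (fun w => _) = Dc cost bst rho st0) //; apply/funext => w; rewrite Hdet.
  under eq_integral do rewrite Hdet.
  rewrite integral_uniform //; last 2 first.
  - exact/measurable_EFinP.
  - by move=> u; rewrite lee_fin Dc_ge0.
  rewrite subr0 invr1 mul1e -integral_itv_bndo_bndc; last first.
    exact/measurable_EFinP/measurable_funTS.
  have := Dc_int cost_ge0 bv rho (st := st0) ler01; rewrite /= add0r => ->.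
  by rewrite mul1r beq.
- exists (fdist R X * M)%type, (pi0, m0), (bstep cost step); split.
    exact: bstep_valid.
  by move=> rho; rewrite beq.
- exists (seq (R * (fdist R X * M))), [:: (1, (pi0, m0))], pi0, (dstep step pi0); split => //.
  move=> rho.
  have H := @dinv R X Req cost cost_ge0 M step step_valid pi0 rho pi0 [:: (1, (pi0, m0))].
  apply: le_trans (H _ _) _.
  + by split; rewrite /wpos /= ?ltr01 // big_cons big_nil addr0.
  + by apply/funext => x; rewrite /mix big_cons big_nil mul1r addr0.
  + by rewrite big_cons big_nil mul1r addr0.
Qed.
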